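(* Let $\lambda=\lambda^x\otimes\mu\in\Pi(\mu,\nu,\gamma)$ with $\lambda^x\in\Pi(\nu^x,\gamma^x)$ for $\mu$-a.e. $x$, where $\pi_{XY}\#\lambda=\nu^x\otimes\mu$ and $\pi_{XZ}\#\lambda=\gamma^x\otimes\mu$. If $\lambda^x$ is an extreme point of $\Pi(\nu^x,\gamma^x)$ for $\mu$-a.e. $x\in X$, then $\lambda$ is an extreme point of $\Pi(\lambda^{XY},\gamma)\cap\Pi(\lambda^{XZ},\nu)$.
   Context: $X,Y,Z$ are complete separable metric spaces with Borel probability measures $\mu,\nu,\gamma$; $\Pi(\mu,\nu,\gamma)$ is the set of Borel probability measures on $X\times Y\times Z$ with those marginals, and $\Pi(\sigma,\eta)$ the set of probability measures on a product with marginals $\sigma,\eta$. $\pi_{XY},\pi_{XZ}$ are projections; $\lambda^{XY}=\pi_{XY}\#\lambda$, $\lambda^{XZ}=\pi_{XZ}\#\lambda$. $\Pi(\lambda^{XY},\gamma)=\{\rho\in\Pi(\mu,\nu,\gamma):\pi_{XY}\#\rho=\lambda^{XY}\}$ and $\Pi(\lambda^{XZ},\nu)=\{\rho\in\Pi(\mu,\nu,\gamma):\pi_{XZ}\#\rho=\lambda^{XZ}\}$. For a measure $\sigma$ on $A$ and a measurable family $(\eta^a)$ of probability measures on $B$, $\eta^a\otimes\sigma$ is the measure with $(\eta^a\otimes\sigma)(E\times F)=\int_E\eta^a(F)d\sigma(a)$ (disintegration, unique up to $\sigma$-null sets). *)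

(* Defs.v *)
From HB Require Import structures.
From mathcomp Require Import all_boot all_order all_algebra.
From mathcomp Require Import all_classical all_reals all_analysis measurable_realfun.

Set Implicit Arguments.
Unset Strict Implicit.
Unset Printing Implicit Defensive.

Import Order.TTheory GRing.Theory Num.Theory.

Local Open Scope classical_set_scope.
Local Open Scope ring_scope.

Definition separable_space (T : topologicalType) : Prop :=
  exists D : set T, countable D /\ closure D = setT.

Definition borel (T : ptopologicalType) := g_sigma_algebraType (@open T).

Section couplings.
Context {R : realType}.

Definition p1 {X Y Z : Type} (p : X * Y * Z) : X := p.1.1.
Definition p2 {X Y Z : Type} (p : X * Y * Z) : Y := p.1.2.
Definition p3 {X Y Z : Type} (p : X * Y * Z) : Z := p.2.
Definition pXY {X Y Z : Type} (p : X * Y * Z) : X * Y := p.1.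
Definition pXZ {X Y Z : Type} (p : X * Y * Z) : X * Z := (p.1.1, p.2).
Definition pX_YZ {X Y Z : Type} (p : X * Y * Z) : X * (Y * Z) :=
  (p.1.1, (p.1.2, p.2)).

Definition same_pushforward {dT dU} {T : measurableType dT}
  {U : measurableType dU} (f : T -> U) (rho lam : set T -> \bar R) : Prop :=
  forall A : set U, measurable A -> rho (f @^-1` A) = lam (f @^-1` A).

Definition Pi2 {dY dZ} {Y : measurableType dY} {Z : measurableType dZ}
  (s : probability Y R) (e : probability Z R) : set (probability (Y * Z)%type R) :=
  [set rho | (forall B : set Y, measurable B -> rho (fst @^-1` B) = s B) /\
             (forall C : set Z, measurable C -> rho (snd @^-1` C) = e C)].

Definition Pi3 {dX dY dZ} {X : measurableType dX} {Y : measurableType dY}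
  {Z : measurableType dZ} (mu : probability X R) (nu : probability Y R)
  (gam : probability Z R) : set (probability (X * Y * Z)%type R) :=
  [set rho | (forall A : set X, measurable A -> rho (p1 @^-1` A) = mu A) /\
             (forall B : set Y, measurable B -> rho (p2 @^-1` B) = nu B) /\
             (forall C : set Z, measurable C -> rho (p3 @^-1` C) = gam C)].

(* Pi(lam^{XY}, gam) = { rho in Pi(mu,nu,gam) | pi_XY # rho = pi_XY # lam } *)
Definition PiXY {dX dY dZ} {X : measurableType dX} {Y : measurableType dY}
  {Z : measurableType dZ} (mu : probability X R) (nu : probability Y R)
  (gam : probability Z R) (lam : probability (X * Y * Z)%type R) :
  set (probability (X * Y * Z)%type R) :=
  [set rho | Pi3 mu nu gam rho /\ same_pushforward pXY rho lam].

(* Pi(lam^{XZ}, nu) = { rho in Pi(mu,nu,gam) | pi_XZ # rho = pi_XZ # lam } *)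
Definition PiXZ {dX dY dZ} {X : measurableType dX} {Y : measurableType dY}
  {Z : measurableType dZ} (mu : probability X R) (nu : probability Y R)
  (gam : probability Z R) (lam : probability (X * Y * Z)%type R) :
  set (probability (X * Y * Z)%type R) :=
  [set rho | Pi3 mu nu gam rho /\ same_pushforward pXZ rho lam].

(* m = eta^a (x) sig : eta is a measurable family of probability measures on B
   indexed by A, and m(E x F) = \int_E eta^a(F) d sig(a) for measurable E, F. *)
Definition is_disintegration {dA dB} {A : measurableType dA}
  {B : measurableType dB} (sig : probability A R) (eta : A -> probability B R)
  (m : set (A * B) -> \bar R) : Prop :=
  (forall F : set B, measurable F -> measurable_fun setT (fun a => eta a F)) /\
  (forall (E : set A) (F : set B), measurable E -> measurable F ->
     m (E `*` F) = (\int[sig]_(a in E) eta a F)%E).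

(* Extreme point of a set C of probability measures: P is in C and is not a
   proper convex combination of two distinct elements of C (measures being
   identified when they agree on all measurable sets). *)
Definition extreme_point {dT} {T : measurableType dT}
  (C : set (probability T R)) (P : probability T R) : Prop :=
  C P /\
  forall (P1 P2 : probability T R) (t : R), C P1 -> C P2 -> 0 < t < 1 ->
    (forall A : set T, measurable A ->
       P A = (t%:E * P1 A + (1 - t)%:E * P2 A)%E) ->
    forall A : set T, measurable A -> P1 A = P2 A.

End couplings.

(* Main.v *)
Require Import Defs.
From HB Require Import structures.
From mathcomp Require Import all_boot all_order all_algebra.
From mathcomp Require Import all_classical all_reals all_analysis measurable_realfun.
From mathcomp Require Import ring lra.
Set Implicit Arguments.
Unset Strict Implicit.
Unset Printing Implicit Defensive.
Import Order.TTheory GRing.Theory Num.Theory.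
Local Open Scope classical_set_scope.
Local Open Scope ring_scope.

Lemma cgen (R : realType) (T : completePseudoMetricType R) :
  separable_space T -> exists g : nat -> set (borel T),
    (forall n, measurable (g n)) /\ (@measurable _ (borel T) `<=` <<s range g >>).
Proof.
move=> [D [cD clD]].
have [e De] : exists e : nat -> T, D `<=` range e.
  have /pcard_surjP [e se] := cD.
  by exists e => x Dx; have [n _ <-] := se x Dx; exists n.
pose g (n : nat) : set T := if @unpickle (nat * nat)%type n is Some im
  then (ball (e im.1) (2 * (im.2.+1%:R)^-1))° else set0.
exists g; split.
  move=> n; apply: sub_sigma_algebra; rewrite /g; case: unpickle => [im|].
    exact: open_interior.
  exact: open0.
apply: smallest_sub; first exact: smallest_sigma_algebra.
move=> U oU.
pose h n := if pselect (g n `<=` U) then g n else set0.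
have -> : U = \bigcup_n h n.
  apply/seteqP; split; last first.
    by move=> x [n _]; rewrite /h; case: pselect => // gU /gU.
  move=> x Ux.
  have : nbhs x U by apply: open_nbhs_nbhs.
  move=> /nbhs_ballP [eps /= eps0 bU].
  have [m _ hm] := near_infty_natSinv_lt (PosNum (divr_gt0 eps0 (ltr0n R 3))).
  have hm' := hm m (leqnn m); rewrite /= in hm'.
  set q := (m.+1%:R)^-1 : R in hm'.
  have q0 : 0 < q by rewrite invr_gt0 ltr0n.
  have : closure D x by rewrite clD.
  move=> /(_ (ball x q)).
  move=> [] //; first exact: nbhsx_ballx.
  move=> d [/De [i _ eid] xd].
  exists (pickle (i, m)) => //.
  have ggen : g (pickle (i, m)) = (ball d (2 * q))° by rewrite /g pickleK /= eid.
  have xin : g (pickle (i, m)) x.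
    rewrite ggen /interior; apply/nbhs_ballP; exists q => //= y xy.
    rewrite -(_ : q + q = 2 * q); last by rewrite mulr2n mulrDl mul1r.
    by apply: ball_triangle xy; apply: ball_sym.
  rewrite /h; case: pselect => // -[]; rewrite ggen => y /interior_subset dy.
  apply: bU.
  have : ball x (q + 2 * q) y by apply: ball_triangle dy.
  apply: le_ball.
  rewrite -[q + 2 * q](_ : 3 * q = _); last first.
    by rewrite (_ : 3 = 1 + 2) ?mulrDl ?mul1r // -natrD.
  move: hm'; rewrite ltr_pdivlMr ?ltr0n // => hm2; lra.
apply: (@sigma_algebra_bigcup _ setT (range g) h) => n; rewrite /h; case: pselect => H.
  by apply: sub_sigma_algebra; exists n.
exact: sigma_algebra0.
Qed.

Local Open Scope ereal_scope.

Section kern.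
Context (R : realType) dX dW (X : measurableType dX) (W : measurableType dW).
Variables (mu : probability X R) (k : X -> probability W R).
Hypothesis mk : forall S, measurable S -> measurable_fun setT (fun x => k x S).

Definition kW : X -> {measure set W -> \bar R} := fun x => k x.
HB.instance Definition _ := isKernel.Build _ _ X W R kW mk.
Let kW1 x : kW x setT = 1. Proof. exact: probability_setT. Qed.
HB.instance Definition _ := Kernel_isProbability.Build _ _ X W R kW kW1.

Lemma kW_int_meas (h : X * W -> \bar R) : (forall z, 0 <= h z) ->
  measurable_fun setT h -> measurable_fun setT (fun x => \int[k x]_w h (x, w)).
Proof. by move=> h0 mh; exact: (measurable_fun_integral_finite_kernel h kW). Qed.

Definition kl : unit -> {measure set X -> \bar R} := fun _ => mu.
Let mkl S : measurable S -> measurable_fun setT (fun x => kl x S).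
Proof. by move=> _; exact: measurable_cst. Qed.
HB.instance Definition _ := isKernel.Build _ _ unit X R kl mkl.
Let kl1 x : kl x setT = 1. Proof. exact: probability_setT. Qed.
HB.instance Definition _ := Kernel_isProbability.Build _ _ unit X R kl kl1.

Definition pairmf (x : X) : {mfun W >-> (X * W)%type} :=
  HB.pack (pair x) (isMeasurableFun.Build _ _ _ _ (pair x) (pair1_measurable x)).

Definition kk : (unit * X)%type -> {measure set (X * W)%type -> \bar R} :=
  fun p => distribution (k p.2) (pairmf p.2).

Lemma kkE p A : kk p A = kW p.2 (xsection A p.2).
Proof.
rewrite /kk /distribution /pushforward /=; congr (k _ _).
by apply/seteqP; split => w /=; rewrite /xsection /= inE.
Qed.

Let mkk A : measurable A -> measurable_fun setT (fun p => kk p A).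
Proof.
move=> mA; rewrite (_ : (fun p => _) = (fun x => kW x (xsection A x)) \o snd).
  apply: measurableT_comp => //.
  by apply: measurable_fun_xsection_finite_kernel; rewrite inE.
by apply/funext => p; rewrite kkE.
Qed.
HB.instance Definition _ := isKernel.Build _ _ _ _ R kk mkk.
Let kk1 x : kk x setT = 1. Proof. exact: probability_setT. Qed.
HB.instance Definition _ := Kernel_isProbability.Build _ _ _ _ R kk kk1.

Definition M := kcomp kl kk tt.

Lemma ME A : M A = \int[mu]_x k x (xsection A x).
Proof. by rewrite /M /kcomp; apply: eq_integral => x _; rewrite kkE. Qed.

Lemma M_int h : (forall z, 0 <= h z) -> measurable_fun setT h ->
  \int[M]_z h z = \int[mu]_x \int[k x]_w h (x, w).
Proof.
move=> h0 mh; rewrite /M integral_kcomp //=; apply: eq_integral => x _.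
by rewrite /kk /distribution ge0_integral_pushforward //=.
Qed.

End kern.

Section kern2.
Context (R : realType) dX dW (X : measurableType dX) (W : measurableType dW).
Variables (mu : probability X R) (k : X -> probability W R).
Hypothesis mk : forall S, measurable S -> measurable_fun setT (fun x => k x S).
Variable L : probability (X * W)%type R.
Hypothesis HL : forall E S, measurable E -> measurable S ->
  L (E `*` S) = \int[mu]_(x in E) k x S.

Lemma rect_unique (m1 m2 : {measure set (X * W)%type -> \bar R}) :
  m1 setT < +oo ->
  (forall E S, measurable E -> measurable S -> m1 (E `*` S) = m2 (E `*` S)) ->
  forall A, measurable A -> m1 A = m2 A.
Proof.
move=> m1T h A mA.
apply: (measure_unique [set A `*` B | A in measurable & B in measurable]
  (fun _ => setT)) => //.
- exact: measurable_prod_measurableType.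
- move=> _ _ [A1 mA1 [B1 mB1 <-]] [A2 mA2 [B2 mB2 <-]].
  rewrite -setXI; exists (A1 `&` A2); first exact: measurableI.
  by exists (B1 `&` B2) => //; exact: measurableI.
- by move=> _; exists setT => //; exists setT => //; rewrite setXTT.
- by rewrite bigcup_const.
- by move=> _ [E mE [S mS <-]]; exact: h.
Qed.

Lemma LME A : measurable A -> L A = M mu k A.
Proof.
apply: rect_unique; first by move: (probability_setT L) => /= ->; rewrite ltey.
move=> E S mE mS; transitivity (\int[mu]_(x in E) k x S); first exact: HL.
symmetry; etransitivity; first exact: ME.
rewrite [RHS]integral_mkcond; apply: eq_integral => x _.
rewrite /patch; case: ifPn => [xE|xE].
  congr (k x _); apply/seteqP; split => w /=; rewrite /xsection /= inE.
    by move=> [].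
  by move=> Sw; split => //; rewrite inE in xE.
rewrite (_ : xsection _ _ = set0) ?measure0 //.
apply/seteqP; split => w //=; rewrite /xsection /= inE => -[Ex _].
by move/negP: xE; apply; rewrite inE.
Qed.

Lemma L_int h : (forall z, 0 <= h z) -> measurable_fun setT h ->
  \int[L]_z h z = \int[mu]_x \int[k x]_w h (x, w).
Proof.
move=> h0 mh; rewrite -M_int //; apply: eq_measure_integral => A mA _.
exact: LME.
Qed.

End kern2.
Local Open Scope ereal_scope.

Section density.
Context (R : realType) d (T : measurableType d).
Variables (m : {measure set T -> \bar R}) (f : T -> \bar R).
Hypotheses (f0 : forall x, 0 <= f x) (mf : measurable_fun setT f).

Definition dens (A : set T) := \int[m]_(x in A) f x.

Let dens0 : dens set0 = 0. Proof. exact: integral_set0. Qed.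
Let dens_ge0 A : 0 <= dens A. Proof. exact: integral_ge0. Qed.
Let dens_sigma_additive : semi_sigma_additive dens.
Proof.
move=> F mF tF mUF; rewrite /dens ge0_integral_bigcup //.
- by apply: is_cvg_nneseries => n _ _; exact: integral_ge0.
- exact: measurable_funTS.
Qed.
HB.instance Definition _ := isMeasure.Build _ _ _ dens dens0 dens_ge0
  dens_sigma_additive.
Definition densM : {measure set T -> \bar R} := dens.
End density.

Lemma ae_countable (R : realType) d (T : measurableType d)
  (mu : {measure set T -> \bar R}) (I : countType) (P : I -> T -> Prop) :
  (forall i, {ae mu, forall x, P i x}) -> {ae mu, forall x, forall i, P i x}.
Proof.
move=> h.
pose F n := if @unpickle I n is Some i then ~` [set x | P i x] else set0.
have : mu.-negligible (\bigcup_n F n).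
  apply: negligible_bigcup => n; rewrite /F; case: unpickle => [i|].
    exact: h.
  exact: negligible_set0.
apply: negligibleS => x /= /existsNP [i Pi].
by exists (pickle i) => //; rewrite /F pickleK.
Qed.

Lemma probT_lty (R : realType) d (T : measurableType d) (P : probability T R) :
  P setT < +oo.
Proof. by rewrite probability_setT ltey. Qed.

Lemma prob_le1 (R : realType) d (T : measurableType d) (P : probability T R) A :
  measurable A -> P A <= 1.
Proof. by move=> mA; rewrite -(probability_setT P) le_measure // inE. Qed.

Definition piH (T : Type) (g : nat -> set T) (s : seq nat) : set T :=
  \big[setI/setT]_(i <- s) g i.

Lemma marginal_eq (R : realType) d (T : measurableType d) (g : nat -> set T)
  (mg : forall n, measurable (g n)) (gen : measurable `<=` <<s range g >>)
  (m1 m2 : probability T R) :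
  (forall s, m1 (piH g s) = m2 (piH g s)) ->
  forall B, measurable B -> m1 B = m2 B.
Proof.
move=> h B mB.
have mH s : measurable (piH g s).
  by rewrite /piH; elim/big_ind : _ => //; exact: measurableI.
apply: (g_sigma_algebra_measure_unique (range (piH g)) _ (fun _ => setT)).
- by move=> _ [s _ <-].
- by move=> n; exists [::] => //; rewrite /piH big_nil.
- by rewrite bigcup_const.
- move=> _ _ [s1 _ <-] [s2 _ <-]; exists (s1 ++ s2) => //.
  by rewrite /piH big_cat.
- by move=> _ [s _ <-]; exact: h.
- by move=> n; exact: probT_lty.
- apply: (sub_sigma_algebra2 (M := range g)); last exact: gen.
  by move=> _ [n _ <-]; exists [:: n] => //; rewrite /piH big_seq1.
Qed.

Lemma dens_exists (R : realType) d (T : measurableType d) (L Q : probability T R)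
  (c : R) : (0 < c)%R -> (forall A, measurable A -> c%:E * Q A <= L A) ->
  exists f : T -> \bar R, [/\ forall p, 0 <= f p, measurable_fun setT f &
    forall A, measurable A -> Q A = \int[L]_(p in A) f p].
Proof.
move=> c0 hQ.
have dom : Q `<< L.
  apply/null_content_dominatesP => A mA LA0.
  apply/eqP; rewrite eq_le measure_ge0 andbT.
  have := hQ A mA; rewrite LA0.
  by rewrite pmule_rle0 // lte_fin.
have [f [f0 ffin fint fE]] := radon_nikodym_sigma_finite dom.
exists f; split => //.
exact: measurable_int fint.
Qed.

Section core.
Context (R : realType) dX dY dZ (X : measurableType dX) (Y : measurableType dY)
  (Z : measurableType dZ).
Local Notation W := (Y * Z)%type.
Variables (mu : probability X R) (k : X -> probability W R).
Hypothesis mk : forall S, measurable S -> measurable_fun setT (fun x => k x S).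
Variable L : probability (X * W)%type R.
Hypothesis HL : forall E S, measurable E -> measurable S ->
  L (E `*` S) = \int[mu]_(x in E) k x S.

Lemma kint S : measurable S -> mu.-integrable setT (fun x => k x S).
Proof.
move=> mS; apply/integrableP; split; first exact: mk.
under eq_integral => x _ do rewrite gee0_abs //.
rewrite -HL //; apply: (le_lt_trans (prob_le1 _ _)); first exact: measurableX.
by rewrite ltey.
Qed.

Section dens_lemmas.
Variable f : X * W -> \bar R.
Hypotheses (f0 : forall p, 0 <= f p) (mf : measurable_fun setT f).

Definition Px x := dens (k x) (fun w => f (x, w)).

Lemma Px_meas S : measurable S -> measurable_fun setT (fun x => Px x S).
Proof.
move=> mS.
rewrite (_ : (fun x => _) = fun x => \int[k x]_w (f \_ (setT `*` S)) (x, w)).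
  apply: (@kW_int_meas _ _ _ _ _ k mk (f \_ (setT `*` S))); first by move=> z; exact: erestrict_ge0.
  exact: ((measurable_restrictT f (measurableX measurableT mS)).1 (measurable_funTS mf)).
apply/funext => x; rewrite /Px /dens integral_mkcond; apply: eq_integral => w _.
by rewrite /patch in_setX /= in_setT.
Qed.

Variable Q : probability (X * W)%type R.
Hypothesis hQ : forall A, measurable A -> Q A = \int[L]_(p in A) f p.

Lemma Px_int E S : measurable E -> measurable S ->
  Q (E `*` S) = \int[mu]_(x in E) Px x S.
Proof.
move=> mE mS.
rewrite hQ; last exact: measurableX.
rewrite integral_mkcond (L_int mk HL); last 2 first.
- by move=> z; exact: erestrict_ge0.
- exact: ((measurable_restrictT f (measurableX mE mS)).1 (measurable_funTS mf)).
rewrite [RHS]integral_mkcond; apply: eq_integral => x _.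
rewrite [RHS]/patch; case: ifPn => xE.
  rewrite /Px /dens integral_mkcond; apply: eq_integral => w _.
  by rewrite /patch in_setX /= xE.
by apply: integral0_eq => w _; rewrite /patch in_setX /= (negbTE xE).
Qed.

Lemma Px_ae S : measurable S ->
  (forall E, measurable E -> Q (E `*` S) = L (E `*` S)) ->
  {ae mu, forall x, Px x S = k x S}.
Proof.
move=> mS hS.
have : ae_eq mu setT (fun x => k x S) (fun x => Px x S).
  apply: integral_ae_eq => //.
  - exact: kint.
  - exact: Px_meas.
  - by move=> E _ mE; rewrite -HL // -hS // Px_int.
apply: filterS => x h; exact/esym/h.
Qed.

End dens_lemmas.

Definition fstmf : {mfun W >-> Y} :=
  HB.pack (@fst Y Z) (isMeasurableFun.Build _ _ _ _ (@fst Y Z) measurable_fst).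
Definition sndmf : {mfun W >-> Z} :=
  HB.pack (@snd Y Z) (isMeasurableFun.Build _ _ _ _ (@snd Y Z) measurable_snd).

Lemma mnormalizeE (m : {measure set W -> \bar R}) (P : probability W R) S :
  m setT = 1 -> mnormalize m P S = m S.
Proof.
by move=> m1; rewrite /mnormalize m1 /= onee_eq0 /= invr1 mule1.
Qed.

Section pointwise.
Variables (nx : X -> probability Y R) (gx : X -> probability Z R).
Variables (gY : nat -> set Y) (gZ : nat -> set Z).
Hypotheses (mgY : forall n, measurable (gY n)) (genY : measurable `<=` <<s range gY >>).
Hypotheses (mgZ : forall n, measurable (gZ n)) (genZ : measurable `<=` <<s range gZ >>).
Variable t : R.
Hypotheses (t0 : (0 < t)%R) (t1 : (t < 1)%R).
Variables f1 f2 : X * W -> \bar R.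
Hypotheses (f10 : forall p, 0 <= f1 p) (mf1 : measurable_fun setT f1).
Hypotheses (f20 : forall p, 0 <= f2 p) (mf2 : measurable_fun setT f2).
Hypothesis f12 : forall p, t%:E * f1 p + (1 - t)%:E * f2 p = 1.

Definition good (f : X * W -> \bar R) x :=
  (forall s, Px f x (fst @^-1` piH gY s) = k x (fst @^-1` piH gY s)) /\
  (forall s, Px f x (snd @^-1` piH gZ s) = k x (snd @^-1` piH gZ s)).

Lemma mpiH d' (T'' : measurableType d') (g : nat -> set T'') s :
  (forall n, measurable (g n)) -> measurable (piH g s).
Proof. by move=> mg; rewrite /piH; elim/big_ind : _ => //; exact: measurableI. Qed.

Lemma pointwise x : extreme_point (Pi2 (nx x) (gx x)) (k x) ->
  good f1 x -> good f2 x -> forall S, measurable S -> Px f1 x S = k x S.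
Proof.
move=> [[kY kZ] kext] [g1Y g1Z] [g2Y g2Z].
have mf1x : measurable_fun setT (fun w => f1 (x, w)).
  exact: (measurableT_comp mf1 (pair1_measurable x)).
have mf2x : measurable_fun setT (fun w => f2 (x, w)).
  exact: (measurableT_comp mf2 (pair1_measurable x)).
pose m1 := densM (k x) (fun w => f10 (x, w)) mf1x.
pose m2 := densM (k x) (fun w => f20 (x, w)) mf2x.
have m1E S : m1 S = Px f1 x S by [].
have m2E S : m2 S = Px f2 x S by [].
have m1T : m1 setT = 1.
  rewrite m1E; have := g1Y [::]; rewrite /piH big_nil preimage_setT => ->.
  exact: probability_setT.
have m2T : m2 setT = 1.
  rewrite m2E; have := g2Y [::]; rewrite /piH big_nil preimage_setT => ->.
  exact: probability_setT.
pose p1 := mnormalize m1 (k x).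
pose p2 := mnormalize m2 (k x).
have p1E S : p1 S = Px f1 x S by rewrite /p1 mnormalizeE.
have p2E S : p2 S = Px f2 x S by rewrite /p2 mnormalizeE.
have pi_p1 : Pi2 (nx x) (gx x) p1.
  split.
  - move=> B mB; apply: (marginal_eq mgY genY (m1 := distribution p1 fstmf)) => // s.
    transitivity (Px f1 x (fst @^-1` piH gY s)); first exact: p1E.
    by rewrite g1Y; apply: kY; exact: mpiH.
  - move=> C mC; apply: (marginal_eq mgZ genZ (m1 := distribution p1 sndmf)) => // s.
    transitivity (Px f1 x (snd @^-1` piH gZ s)); first exact: p1E.
    by rewrite g1Z; apply: kZ; exact: mpiH.
have pi_p2 : Pi2 (nx x) (gx x) p2.
  split.
  - move=> B mB; apply: (marginal_eq mgY genY (m1 := distribution p2 fstmf)) => // s.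
    transitivity (Px f2 x (fst @^-1` piH gY s)); first exact: p2E.
    by rewrite g2Y; apply: kY; exact: mpiH.
  - move=> C mC; apply: (marginal_eq mgZ genZ (m1 := distribution p2 sndmf)) => // s.
    transitivity (Px f2 x (snd @^-1` piH gZ s)); first exact: p2E.
    by rewrite g2Z; apply: kZ; exact: mpiH.
have dec S : measurable S -> k x S = t%:E * p1 S + (1 - t)%:E * p2 S.
  move=> mS; rewrite p1E p2E /Px /dens.
  transitivity (\int[k x]_(w in S) (cst 1 w)).
    by rewrite integral_cst // mul1e.
  transitivity (\int[k x]_(w in S) (t%:E * f1 (x, w) + (1 - t)%:E * f2 (x, w))).
    by apply: eq_integral => w _; rewrite f12.
  rewrite ge0_integralD //; last 4 first.
  - by move=> w _; apply: mule_ge0 => //; rewrite lee_fin; exact: ltW.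
  - by apply: measurable_funeM; exact: measurable_funTS.
  - by move=> w _; apply: mule_ge0 => //; rewrite lee_fin subr_ge0; exact: ltW.
  - by apply: measurable_funeM; exact: measurable_funTS.
  rewrite ge0_integralZl_EFin //; last exact: ltW.
  rewrite ge0_integralZl_EFin //; last by rewrite subr_ge0; exact: ltW.
  all: try exact: measurable_funTS.
have eq12 := kext p1 p2 t pi_p1 pi_p2 (ltac:(apply/andP; split => //)) dec.
move=> S mS; have e : p1 S = p2 S := eq12 S mS.
rewrite -p1E dec // -e.
have : p1 S \is a fin_num.
  by rewrite ge0_fin_numE ?measure_ge0 // (le_lt_trans (prob_le1 _ _)) ?ltey.
move=> /fineK <-; rewrite -!EFinM -EFinD; congr EFin; ring.
Qed.

End pointwise.

Lemma modify_meas (N : set (X * W)%type) (f : X * W -> \bar R) :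
  measurable N -> measurable_fun setT f ->
  measurable_fun setT (fun p => if p \in N then 1 else f p).
Proof.
move=> mN mf.
rewrite (_ : (fun p => _) = fun p => (cst 1 \_ N) p + (f \_ (~` N)) p).
  apply: emeasurable_funD.
  - exact: ((measurable_restrictT (cst 1) mN).1 (measurable_cst _)).
  - exact: ((measurable_restrictT f (measurableC mN)).1 (measurable_funTS mf)).
apply/funext => p; rewrite /patch in_setC; case: (boolP (p \in N)) => pN /=.
  by rewrite adde0.
by rewrite add0e.
Qed.

Theorem core_thm (nx : X -> probability Y R) (gx : X -> probability Z R)
  (gY : nat -> set Y) (gZ : nat -> set Z)
  (mgY : forall n, measurable (gY n)) (genY : measurable `<=` <<s range gY >>)
  (mgZ : forall n, measurable (gZ n)) (genZ : measurable `<=` <<s range gZ >>)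
  (t : R) (t0 : (0 < t)%R) (t1 : (t < 1)%R) (Q1 Q2 : probability (X * W)%type R) :
  (forall A, measurable A -> L A = t%:E * Q1 A + (1 - t)%:E * Q2 A) ->
  (forall E B, measurable E -> measurable B ->
     Q1 (E `*` (fst @^-1` B)) = L (E `*` (fst @^-1` B))) ->
  (forall E C, measurable E -> measurable C ->
     Q1 (E `*` (snd @^-1` C)) = L (E `*` (snd @^-1` C))) ->
  (forall E B, measurable E -> measurable B ->
     Q2 (E `*` (fst @^-1` B)) = L (E `*` (fst @^-1` B))) ->
  (forall E C, measurable E -> measurable C ->
     Q2 (E `*` (snd @^-1` C)) = L (E `*` (snd @^-1` C))) ->
  {ae mu, forall x, extreme_point (Pi2 (nx x) (gx x)) (k x)} ->
  forall A, measurable A -> Q1 A = L A.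
Proof.
move=> HQ H1Y H1Z H2Y H2Z Hext.
have t'0 : (0 < 1 - t)%R by rewrite subr_gt0.
have hQ1le A : measurable A -> t%:E * Q1 A <= L A.
  move=> mA; rewrite HQ // leeDl // mule_ge0 // lee_fin; exact: ltW.
have hQ2le A : measurable A -> (1 - t)%:E * Q2 A <= L A.
  move=> mA; rewrite HQ // leeDr // mule_ge0 // lee_fin; exact: ltW.
have [f1 [f10 mf1 hf1]] := dens_exists t0 hQ1le.
have [f2 [f20 mf2 hf2]] := dens_exists t'0 hQ2le.
pose g p := t%:E * f1 p + (1 - t)%:E * f2 p.
have mg : measurable_fun setT g.
  by apply: emeasurable_funD; apply: measurable_funeM.
have ae1 : ae_eq L setT (EFin \o cst 1%R) g.
  apply: integral_ae_eq => //.
  - exact: finite_measure_integrable_cst.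
  - move=> E _ mE.
    transitivity (L E).
      by rewrite (eq_integral (cst 1)) // integral_cst // mul1e.
    rewrite HQ // hf1 // hf2 // /g ge0_integralD //; last 4 first.
    - by move=> p _; apply: mule_ge0 => //; rewrite lee_fin; exact: ltW.
    - by apply: measurable_funeM; exact: measurable_funTS.
    - by move=> p _; apply: mule_ge0 => //; rewrite lee_fin; exact: ltW.
    - by apply: measurable_funeM; exact: measurable_funTS.
    rewrite ge0_integralZl_EFin //; last exact: ltW.
    rewrite ge0_integralZl_EFin //; last exact: ltW.
    all: try exact: measurable_funTS.
case: ae1 => N [mN LN0 subN].
have gN p : ~ N p -> g p = 1.
  move=> Np; case: (pselect (g p = 1)) => // ngp; exfalso; apply: Np.
  by apply: subN => /(_ I) e; apply: ngp; rewrite -e.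
pose f1' p := if p \in N then 1 else f1 p.
pose f2' p := if p \in N then 1 else f2 p.
have f1'0 p : 0 <= f1' p by rewrite /f1'; case: ifP.
have f2'0 p : 0 <= f2' p by rewrite /f2'; case: ifP.
have mf1' : measurable_fun setT f1' := modify_meas mN mf1.
have mf2' : measurable_fun setT f2' := modify_meas mN mf2.
have notN p : ~ N p -> (p \in N) = false.
  by move=> Np; apply/negbTE/negP; rewrite inE.
have hf1' A : measurable A -> Q1 A = \int[L]_(p in A) f1' p.
  move=> mA; rewrite hf1 //; apply: ae_eq_integral => //.
  - exact: measurable_funTS.
  - exact: measurable_funTS.
  - exists N; split => // p /= h; apply: contrapT => Np; apply: h => _.
    by rewrite /f1' notN.
have hf2' A : measurable A -> Q2 A = \int[L]_(p in A) f2' p.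
  move=> mA; rewrite hf2 //; apply: ae_eq_integral => //.
  - exact: measurable_funTS.
  - exact: measurable_funTS.
  - exists N; split => // p /= h; apply: contrapT => Np; apply: h => _.
    by rewrite /f2' notN.
have f12 p : t%:E * f1' p + (1 - t)%:E * f2' p = 1.
  rewrite /f1' /f2'; case: ifPn => pN.
    by rewrite !mule1 -EFinD addrC subrK.
  by apply: gN => Np; move/negP: pN; apply; rewrite inE.
have mfst s : measurable (fst @^-1` piH gY s : set W).
  by rewrite -setXT; apply: measurableX => //; exact: mpiH.
have msnd s : measurable (snd @^-1` piH gZ s : set W).
  by rewrite -setTX; apply: measurableX => //; exact: mpiH.
have Y1 : {ae mu, forall x, forall s,
    Px f1' x (fst @^-1` piH gY s) = k x (fst @^-1` piH gY s)}.
  apply: ae_countable => s; apply: (Px_ae f1'0 mf1' hf1') => //.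
  by move=> E mE; apply: H1Y => //; exact: mpiH.
have Z1 : {ae mu, forall x, forall s,
    Px f1' x (snd @^-1` piH gZ s) = k x (snd @^-1` piH gZ s)}.
  apply: ae_countable => s; apply: (Px_ae f1'0 mf1' hf1') => //.
  by move=> E mE; apply: H1Z => //; exact: mpiH.
have Y2 : {ae mu, forall x, forall s,
    Px f2' x (fst @^-1` piH gY s) = k x (fst @^-1` piH gY s)}.
  apply: ae_countable => s; apply: (Px_ae f2'0 mf2' hf2') => //.
  by move=> E mE; apply: H2Y => //; exact: mpiH.
have Z2 : {ae mu, forall x, forall s,
    Px f2' x (snd @^-1` piH gZ s) = k x (snd @^-1` piH gZ s)}.
  apply: ae_countable => s; apply: (Px_ae f2'0 mf2' hf2') => //.
  by move=> E mE; apply: H2Z => //; exact: mpiH.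
have G1 : {ae mu, forall x, good gY gZ f1' x}.
  by apply: filterS2 Y1 Z1 => x h1 h2; split.
have G2 : {ae mu, forall x, good gY gZ f2' x}.
  by apply: filterS2 Y2 Z2 => x h1 h2; split.
have fin : {ae mu, forall x, forall S, measurable S -> Px f1' x S = k x S}.
  apply: filterS3 Hext G1 G2 => x e h1 h2.
  exact: (pointwise mgY genY mgZ genZ t0 t1 f1'0 mf1' f2'0 mf2' f12 e h1 h2).
apply: rect_unique; first exact: probT_lty.
move=> E S mE mS.
transitivity (\int[mu]_(x in E) Px f1' x S); first exact: (Px_int f1'0 mf1' hf1').
transitivity (\int[mu]_(x in E) k x S); last exact: (esym (HL mE mS)).
apply: ae_eq_integral => //.
- exact: measurable_funTS (Px_meas f1'0 mf1' mS).
- exact: measurable_funTS (mk mS).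
- by apply: filterS fin => x h _; exact: h.
Qed.

End core.
Local Open Scope ereal_scope.

Section transfer.
Context dX dY dZ (X : measurableType dX) (Y : measurableType dY) (Z : measurableType dZ).

Lemma mpX_YZ : measurable_fun setT (@pX_YZ X Y Z).
Proof.
apply/measurable_fun_pairP; split => /=.
  exact: (measurableT_comp measurable_fst measurable_fst).
apply/measurable_fun_pairP; split => /=.
  exact: (measurableT_comp measurable_snd measurable_fst).
exact: measurable_snd.
Qed.

Definition qinv (q : X * (Y * Z)) : X * Y * Z := ((q.1, q.2.1), q.2.2).

Lemma mqinv : measurable_fun setT qinv.
Proof.
apply/measurable_fun_pairP; split => /=.
  apply/measurable_fun_pairP; split => /=.
    exact: measurable_fst.
  exact: (measurableT_comp measurable_fst measurable_snd).
exact: (measurableT_comp measurable_snd measurable_snd).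
Qed.

Definition pmf : {mfun (X * Y * Z)%type >-> (X * (Y * Z))%type} :=
  HB.pack (@pX_YZ X Y Z) (isMeasurableFun.Build _ _ _ _ (@pX_YZ X Y Z) mpX_YZ).

Lemma mpre (B : set (X * (Y * Z))%type) : measurable B ->
  measurable (@pX_YZ X Y Z @^-1` B).
Proof. by move=> mB; rewrite -[X in measurable X]setTI; exact: mpX_YZ. Qed.

Lemma preinv (A : set (X * Y * Z)%type) : @pX_YZ X Y Z @^-1` (qinv @^-1` A) = A.
Proof. by apply/seteqP; split => -[[a b] c]. Qed.

Lemma mqpre (A : set (X * Y * Z)%type) : measurable A -> measurable (qinv @^-1` A).
Proof. by move=> mA; rewrite -[X in measurable X]setTI; exact: mqinv. Qed.

Lemma preXY (E : set X) (B : set Y) :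
  @pX_YZ X Y Z @^-1` (E `*` (fst @^-1` B)) = @pXY X Y Z @^-1` (E `*` B).
Proof. by apply/seteqP; split => -[[a b] c]. Qed.

Lemma preXZ (E : set X) (C : set Z) :
  @pX_YZ X Y Z @^-1` (E `*` (snd @^-1` C)) = @pXZ X Y Z @^-1` (E `*` C).
Proof. by apply/seteqP; split => -[[a b] c]. Qed.

End transfer.

Local Close Scope ereal_scope.
Unset Implicit Arguments.
Set Strict Implicit.

Theorem mainTheorem12 (R : realType)
  (X Y Z : completePseudoMetricType R)
  (hX : hausdorff_space X) (hY : hausdorff_space Y) (hZ : hausdorff_space Z)
  (sX : separable_space X) (sY : separable_space Y) (sZ : separable_space Z)
  (mu : probability (borel X) R) (nu : probability (borel Y) R)
  (gam : probability (borel Z) R)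
  (lam : probability (borel X * borel Y * borel Z)%type R)
  (lamx : borel X -> probability (borel Y * borel Z)%type R)
  (nux : borel X -> probability (borel Y) R)
  (gamx : borel X -> probability (borel Z) R) :
  Pi3 mu nu gam lam ->
  is_disintegration mu lamx (fun S => lam (pX_YZ @^-1` S)) ->
  is_disintegration mu nux (fun S => lam (pXY @^-1` S)) ->
  is_disintegration mu gamx (fun S => lam (pXZ @^-1` S)) ->
  {ae mu, forall x, Pi2 (nux x) (gamx x) (lamx x)} ->
  {ae mu, forall x, extreme_point (Pi2 (nux x) (gamx x)) (lamx x)} ->
  extreme_point (PiXY mu nu gam lam `&` PiXZ mu nu gam lam) lam.
Proof.
move=> Hpi [mk HL'] _ _ _ Hext.
have [gY [mgY genY]] := cgen sY.
have [gZ [mgZ genZ]] := cgen sZ.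
pose F := @pmf _ _ _ (borel X) (borel Y) (borel Z).
have key : forall (P1 P2 : probability (borel X * borel Y * borel Z)%type R) (t : R),
    (0 < t < 1)%R -> (PiXY mu nu gam lam `&` PiXZ mu nu gam lam) P1 ->
    (PiXY mu nu gam lam `&` PiXZ mu nu gam lam) P2 ->
    (forall A, measurable A -> lam A = (t%:E * P1 A + (1 - t)%:E * P2 A)%E) ->
    forall A, measurable A -> P1 A = lam A.
  move=> P1 P2 t /andP[t0 t1] [[_ s1Y] [_ s1Z]] [[_ s2Y] [_ s2Z]] HP A mA.
  have core := @core_thm R _ _ _ _ _ _ mu lamx mk (distribution lam F) HL' nux gamx
    gY gZ mgY genY mgZ genZ t t0 t1 (distribution P1 F) (distribution P2 F).
  rewrite -(preinv A); apply: core => //.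
  - by move=> B mB; exact: (HP _ (mpre mB)).
  - move=> E B mE mB.
    by have := s1Y _ (measurableX mE mB); rewrite -preXY.
  - move=> E C mE mC.
    by have := s1Z _ (measurableX mE mC); rewrite -preXZ.
  - move=> E B mE mB.
    by have := s2Y _ (measurableX mE mB); rewrite -preXY.
  - move=> E C mE mC.
    by have := s2Z _ (measurableX mE mC); rewrite -preXZ.
  - exact: mqpre.
split.
  by split; split => //; move=> A mA.
move=> P1 P2 t h1 h2 t01 HP A mA.
have /andP[t0 t1] := t01.
rewrite (key P1 P2 t t01 h1 h2 HP A mA).
apply/esym/(key P2 P1 (1 - t)%R) => //.
  by apply/andP; split; rewrite ?subr_gt0 // ltrBlDr ltrDl.
move=> B mB; rewrite HP // addeC; congr (_ + _)%E.
by rewrite opprB addrC subrK.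
Qed.
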